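(* Let $K,n\in\mathbb{N}^*$ and $\mu\in H^3((0,1),\mathbb{R})$ satisfy (H2)$_{K,n}$. Then there exist at least $n$ indices $j\in\mathbb{N}^*$ with $c_j\neq0$.
   Context: $\varphi_j=\sqrt2\sin(j\pi x)$, $\lambda_j=(j\pi)^2$, $c_j=\langle\mu\varphi_1,\varphi_j\rangle\langle\mu\varphi_K,\varphi_j\rangle$ with $\langle f,g\rangle=\int_0^1f\bar g$. (H2)$_{K,n}$: $\sum_jj^{4n}|c_j|<\infty$ and, with $A^p_K=(-1)^{p-1}\sum_{j}(\lambda_j-\frac{\lambda_1+\lambda_K}2)(\lambda_K-\lambda_j)^{p-1}(\lambda_j-\lambda_1)^{p-1}c_j$, one has $A^p_K=0$ for $1\le p\le n-1$ and $A^n_K\ne0$. *)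

(* Defs.v *)
From HB Require Import structures.
From mathcomp Require Import all_boot all_order all_algebra.
From mathcomp Require Import all_classical all_reals all_analysis.
Set Implicit Arguments. Unset Strict Implicit. Unset Printing Implicit Defensive.
Import Order.TTheory GRing.Theory Num.Theory numFieldNormedType.Exports.
Local Open Scope classical_set_scope.
Local Open Scope ring_scope.

Section Defs.
Variable R : realType.

Notation leb := (@lebesgue_measure R).

Definition phi (j : nat) (x : R) : R := Num.sqrt 2 * sin (j%:R * pi * x).
Definition lambda (j : nat) : R := (j%:R * pi) ^+ 2.

Definition inner (f g : R -> R) : R := \int[leb]_(x in `[(0%R:R), 1]) (f x * g x).

Definition coef (mu : R -> R) (K j : nat) : R :=
  inner (fun x => mu x * phi 1 x) (phi j) * inner (fun x => mu x * phi K x) (phi j).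

Definition Aterm (mu : R -> R) (K p j : nat) : R :=
  (lambda j - (lambda 1 + lambda K) / 2) * (lambda K - lambda j) ^+ (p.-1)
  * (lambda j - lambda 1) ^+ (p.-1) * coef mu K j.
Definition AKp (mu : R -> R) (K p : nat) : R :=
  (-1) ^+ (p.-1) * limn (fun N => \sum_(1 <= j < N) Aterm mu K p j).

Definition H2 (mu : R -> R) (K n : nat) : Prop :=
  (\sum_(1 <= j <oo) (((j%:R : R) ^+ (4 * n) * `|coef mu K j|)%:E) < +oo)%E /\
  (forall p, (1 <= p <= n.-1)%N -> AKp mu K p = 0) /\
  AKp mu K n != 0.

Definition L2_01 (g : R -> R) : Prop :=
  measurable_fun `](0%R:R), 1%R[ g /\
  (\int[leb]_(x in `](0%R:R), 1%R[) ((g x) ^+ 2)%:E < +oo)%E.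

Definition test_fun (f : R -> R) : Prop :=
  (forall (k : nat) (x : R), derivable (derive1n k f) x 1) /\
  exists a b : R, [/\ 0 < a, a < b, b < 1 &
    forall x, x < a \/ b < x -> f x = 0].

Definition weak_deriv (k : nat) (f g : R -> R) : Prop :=
  forall phi0 : R -> R, test_fun phi0 ->
    \int[leb]_(x in `](0%R:R), 1%R[) (f x * derive1n k phi0 x)
    = (-1) ^+ k * \int[leb]_(x in `](0%R:R), 1%R[) (g x * phi0 x).

Definition H3_01 (mu : R -> R) : Prop :=
  L2_01 mu /\ forall k : nat, (1 <= k <= 3)%N ->
    exists g : R -> R, L2_01 g /\ weak_deriv k mu g.

End Defs.

(* Main.v *)
Require Import Defs.
From HB Require Import structures.
From mathcomp Require Import all_boot all_order all_algebra.
From mathcomp Require Import all_classical all_reals all_analysis.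
From mathcomp Require Import ring.
Import Order.TTheory GRing.Theory Num.Theory numFieldNormedType.Exports.
Local Open Scope ring_scope.

Lemma vander_seq (R : comRingType) (x w : nat -> R) (S : seq nat) (m : nat) :
  (size S <= m)%N -> (forall i, (i < m)%N -> \sum_(j <- S) w j * x j ^+ i = 0) ->
  \sum_(j <- S) w j * x j ^+ m = 0.
Proof.
elim: S w m => [|a S IH] w m hs hz; first by rewrite big_nil.
case: m hs hz => [//|m] hs hz.
pose w' := fun j => w j * (x j - x a).
have key : forall i, \sum_(j <- a :: S) w' j * x j ^+ i =
   \sum_(j <- a::S) w j * x j ^+ i.+1 - x a * \sum_(j <- a::S) w j * x j ^+ i.
  move=> i; rewrite mulr_sumr -sumrB; apply: eq_bigr => j _; rewrite /w' exprS; ring.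
have hS : forall i, \sum_(j <- S) w' j * x j ^+ i = \sum_(j <- a :: S) w' j * x j ^+ i.
  by move=> i; rewrite big_cons /w' subrr mulr0 mul0r add0r.
have := IH w' m hs.
rewrite hS key (hz m) // mulr0 subr0; apply => i him.
by rewrite hS key !hz ?mulr0 ?subr0 // ltnS ltnW.
Qed.

Theorem lemma5p3 (R : realType) (K n : nat) (mu : R -> R) :
  (0 < K)%N -> (0 < n)%N -> H3_01 mu -> H2 mu K n ->
  exists S : seq nat,
    [/\ uniq S, (n <= size S)%N & forall j, j \in S -> (0 < j)%N /\ coef mu K j != 0].
Proof.
move=> K0 n0 _ [_ [HA HAn]].
have [[N0 HN0]|Hinf] := pselect (exists N0, forall j, (N0 <= j)%N -> coef mu K j = 0).
  pose N1 := N0.+1.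
  pose S0 := [seq j <- index_iota 1 N1 | coef mu K j != 0].
  have S0P : forall j, j \in S0 -> (0 < j)%N /\ coef mu K j != 0.
    by move=> j; rewrite mem_filter mem_index_iota => /andP[-> /andP[-> _]].
  have S0u : uniq S0 by rewrite filter_uniq // iota_uniq.
  case: (leqP n (size S0)) => hsz; first by exists S0.
  pose w := fun j => (lambda R j - (lambda R 1 + lambda R K) / 2) * coef mu K j.
  pose x := fun j => (lambda R K - lambda R j) * (lambda R j - lambda R 1).
  have Aeq : forall p, AKp mu K p = (-1) ^+ p.-1 * \sum_(j <- S0) w j * x j ^+ p.-1.
    move=> p; rewrite /AKp; congr (_ * _).
    apply: lim_near_cst; first exact: norm_hausdorff.
    exists N1 => // N /= HN.
    rewrite (big_cat_nat _ (n:=N1)) //=.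
    rewrite [X in _ + X]big1_seq ?addr0; last first.
      move=> j /andP[_]; rewrite mem_index_iota => /andP[hj _].
      by rewrite /Aterm HN0 ?mulr0 // ltnW.
    rewrite big_filter [RHS]big_mkcond /=; apply: eq_bigr => j _.
    rewrite /Aterm; have [E|_] := eqVneq (coef mu K j) 0; first by rewrite E mulr0.
    rewrite /Aterm /w /x exprMn; ring.
  have hz : \sum_(j <- S0) w j * x j ^+ n.-1 = 0.
    apply: vander_seq; first by rewrite -ltnS prednK.
    move=> i hi; have h1 : (0 < i.+1 <= n.-1)%N by [].
    by move/eqP: (HA _ h1); rewrite Aeq /= mulf_eq0 signr_eq0 /= => /eqP.
  by move: HAn; rewrite Aeq hz mulr0 eqxx.
have Hex : forall N0, exists j, (N0 <= j)%N /\ coef mu K j != 0.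
  move=> N0; case: (pselect (exists j, (N0 <= j)%N /\ coef mu K j != 0)) => // H.
  exfalso; apply: Hinf; exists N0 => j Hj.
  by case: (eqVneq (coef mu K j) 0) => // Hc; exfalso; apply: H; exists j.
have Hk : forall k, exists S : seq nat,
    [/\ uniq S, size S = k & forall j, j \in S -> (0 < j)%N /\ coef mu K j != 0].
  elim=> [|k [S [Su Ss SP]]]; first by exists [::].
  have [j [hj cj]] := Hex (\max_(i <- S) i).+1.
  have jS : j \notin S.
    apply/negP => jin; have h := @leq_bigmax_seq _ S xpredT (fun i => i) j jin isT.
    by move: (leq_trans hj h); rewrite ltnn.
  exists (j :: S); split => //=; first by rewrite jS.
  - by rewrite Ss.
  - move=> i; rewrite inE => /orP[/eqP ->|/SP //]; split => //.
    by apply: leq_trans hj.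
have [S [Su Ss SP]] := Hk n; exists S; split => //; by rewrite Ss.
Qed.
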